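(* $\mathsf{AP}(R_2,R_2)=\operatorname{Pol}(R_2,R'_2)=\mathsf{I}$.
   Context: Tuples in $\{0,1\}^4$ are written as strings $abcd$. The relations $R_1,\dots,R_5\subseteq\{0,1\}^4$ are $R_1=\{0000,1000,0100,1100,1010,0110,1001,0101,0011,1011,0111,1111\}$, $R_2=\{0000,1000,0100,1100,1010,0101,0011,1111\}$, $R_3=\{0000,1100,1010,0101,0011,1011,0111,1111\}$, $R_4=\{0000,1100,1010,0101,0011,1111\}$, $R_5=\{0000,1100,1010,0110,1001,0101,0011,1111\}$. For $R,S\subseteq\{0,1\}^4$, a Boolean function $f\colon\{0,1\}^n\to\{0,1\}$ is analogy-preserving relative to $(R,S)$ if for all $\mathbf{a},\mathbf{b},\mathbf{c},\mathbf{d}\in\{0,1\}^n$ with $(a_i,b_i,c_i,d_i)\in R$ for every $i$ and such that $(f(\mathbf{a}),f(\mathbf{b}),f(\mathbf{c}),x)\in S$ for some $x\in\{0,1\}$, we have $(f(\mathbf{a}),f(\mathbf{b}),f(\mathbf{c}),f(\mathbf{d}))\in S$; $\mathsf{AP}(R,S)$ is the set of all such functions of all arities. $S':=S\cup\{(a,b,c,d)\mid\nexists x\colon(a,b,c,x)\in S\}$, and $\operatorname{Pol}(R,S)$ is the set of Boolean functions $f$ with $f(\mathbf{a}_1,\dots,\mathbf{a}_n)\in S$ (componentwise) for all $\mathbf{a}_1,\dots,\mathbf{a}_n\in R$. $\mathsf{I}$ is the set of all Boolean functions (of all arities) that are constant or a projection. *)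

(* Defs.v *)
From mathcomp Require Import all_boot.
Set Implicit Arguments. Unset Strict Implicit. Unset Printing Implicit Defensive.

(* A 4-tuple abcd in {0,1}^4 is (a,b,c,d) : bool*bool*bool*bool, 1 = true. *)
Definition quad := (bool * bool * bool * bool)%type.
Definition rel4 := quad -> bool.

Definition rel_of (s : seq quad) : rel4 := fun q => q \in s.

Definition R2 : rel4 := rel_of
  [:: (false,false,false,false); (true,false,false,false);
      (false,true,false,false);  (true,true,false,false);
      (true,false,true,false);   (false,true,false,true);
      (false,false,true,true);   (true,true,true,true)].

Definition rel_prime (S : rel4) : rel4 :=
  fun q => let: (a,b,c,d) := q in S q || ~~ [exists x : bool, S (a,b,c,x)].

Definition boolfun n := n.-tuple bool -> bool.

Definition compR (R : rel4) n (a b c d : n.-tuple bool) : Prop :=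
  forall i : 'I_n, R (tnth a i, tnth b i, tnth c i, tnth d i).

Definition AP (R S : rel4) n (f : boolfun n) : Prop :=
  forall a b c d : n.-tuple bool, compR R a b c d ->
    (exists x : bool, S (f a, f b, f c, x)) ->
    S (f a, f b, f c, f d).

(* Pol(R,S): f applied componentwise to n tuples of R lies in S.  Writing the
   n tuples of R as the columns of a 4 x n matrix with rows a,b,c,d. *)
Definition Pol (R S : rel4) n (f : boolfun n) : Prop :=
  forall a b c d : n.-tuple bool, compR R a b c d -> S (f a, f b, f c, f d).

Definition Iclone n (f : boolfun n) : Prop :=
  (exists c : bool, forall x, f x = c) \/
  (exists i : 'I_n, forall x, f x = tnth x i).

(* Main.v *)
Require Import Defs.
From mathcomp Require Import all_boot.

Lemma exb (P : pred bool) : [exists x, P x] = P true || P false.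
Proof.
apply/existsP/orP.
  by case=> [[]] ->; [left|right].
by case=> h; [exists true|exists false].
Qed.
Lemma R2pE x y z w : rel_prime R2 (x,y,z,w) =
  if ~~ x && y then true else w == (z && (x == y)).
Proof. rewrite /rel_prime exb. by case: x; case: y; case: z; case: w. Qed.

Section S.
Variable n : nat.
Variable f : boolfun n.
Hypothesis H : Pol R2 (rel_prime R2) f.

Let t0 : n.-tuple bool := [tuple false | _ < n].
Let t1 : n.-tuple bool := [tuple true | _ < n].
Let neg (a : n.-tuple bool) : n.-tuple bool := [tuple ~~ tnth a j | j < n].
Let meet (a b : n.-tuple bool) : n.-tuple bool := [tuple tnth a j && tnth b j | j < n].
Let e (i : 'I_n) : n.-tuple bool := [tuple j == i | j < n].

Lemma f0_true : f t0 = true -> forall x, f x = true.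
Proof.
move=> h x.
have hc : compR R2 t0 x t0 t0.
  by move=> j; rewrite !tnth_mktuple; case: (tnth x j).
have := H _ _ _ _ hc; rewrite R2pE h.
by case: (f x).
Qed.

Lemma f1_false : f t0 = false -> f t1 = false -> forall x, f x = false.
Proof.
move=> h0 h1 x.
have hc : compR R2 (neg x) t0 t1 x.
  by move=> j; rewrite !tnth_mktuple; case: (tnth x j).
have := H _ _ _ _ hc; rewrite R2pE h0 h1.
by case: (f x); case: (f (neg x)).
Qed.

Lemma selfdual : f t0 = false -> f t1 = true -> forall x, f (neg x) = ~~ f x.
Proof.
move=> h0 h1 x.
have hc : compR R2 x t0 t1 (neg x).
  by move=> j; rewrite !tnth_mktuple; case: (tnth x j).
have := H _ _ _ _ hc; rewrite R2pE h0 h1.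
by case: (f x); case: (f (neg x)).
Qed.

Lemma meetc (a b : n.-tuple bool) : f a = true -> f b = true -> f (meet a b) = true.
Proof.
move=> ha hb.
have hc : compR R2 a b a (meet a b).
  by move=> j; rewrite !tnth_mktuple; case: (tnth a j); case: (tnth b j).
have := H _ _ _ _ hc; rewrite R2pE ha hb.
by case: (f (meet a b)).
Qed.

Lemma upc (a y : n.-tuple bool) : f t1 = true -> f a = true -> (forall j, tnth a j -> tnth y j) -> f y = true.
Proof.
move=> h1 ha hle.
have hc : compR R2 a t1 a y.
  move=> j; rewrite !tnth_mktuple; have := hle j.
  by case: (tnth a j); case: (tnth y j) => // /(_ isT).
have := H _ _ _ _ hc; rewrite R2pE ha h1.
by case: (f y).
Qed.

Lemma proj_case : f t0 = false -> f t1 = true ->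
  exists i : 'I_n, forall x, f x = tnth x i.
Proof.
move=> h0 h1.
pose M (x : n.-tuple bool) := #|[set j | tnth x j]|.
case: (arg_minnP M (P := fun x => f x) (i0 := t1)) => //= x fx xmin.
have [i xi] : exists i, tnth x i.
  apply/existsP; apply: contraT; rewrite negb_exists => /forallP hn.
  suff : x = t0 by move=> E; rewrite E h0 in fx.
  by apply: eq_from_tnth => j; rewrite tnth_mktuple; apply/negbTE.
have fe : f (e i) = true.
  case E: (f (e i)) => //.
  have fn : f (neg (e i)) = true by rewrite selfdual // E.
  have fm := meetc _ _ fx fn.
  have := xmin _ fm; rewrite /M.
  have -> : [set j | tnth (meet x (neg (e i))) j] = [set j | tnth x j] :\ i.
    by apply/setP => j; rewrite !inE !tnth_mktuple andbC.
  rewrite (cardsD1 i [set j | tnth x j]) inE xi.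
  by rewrite add1n ltnn.
exists i => y.
case yi: (tnth y i).
  apply: upc h1 fe _ => j; rewrite tnth_mktuple => /eqP ->; exact: yi.
have : f (neg y) = true.
  apply: upc h1 fe _ => j; rewrite !tnth_mktuple => /eqP ->; by rewrite yi.
by rewrite selfdual //; case: (f y).
Qed.

End S.

Theorem mainTheorem8 :
  forall (n : nat) (f : boolfun n),
    (AP R2 R2 f <-> Pol R2 (rel_prime R2) f) /\
    (Pol R2 (rel_prime R2) f <-> Iclone f).
Proof.
move=> n f; split.
  split.
    move=> hA a b c d hc; have := hA a b c d hc.
    rewrite /rel_prime; case: (R2 _) => //= h.
    by apply: contraT => /negPn /existsP [x hx]; apply: h; exists x.
  move=> hP a b c d hc [x hx]; have := hP a b c d hc.
  rewrite /rel_prime; case: (R2 _) => //= /existsP [].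
  by exists x.
split.
  move=> hP.
  case h0: (f [tuple false | _ < n]).
    by left; exists true; apply: f0_true.
  case h1: (f [tuple true | _ < n]).
    by right; apply: proj_case.
  by left; exists false; apply: f1_false.
case=> [[k hk] | [i hi]] a b c d hc.
  by rewrite !hk; case: k {hk}.
rewrite !hi /rel_prime; by rewrite hc.
Qed.
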